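(* Let $f\in\mathrm{Homeo}_*(\mathbb{T}^2)$, let $F:\mathbb{R}^2\to\mathbb{R}^2$ be a lift of $f$, and let $D\subset\mathbb{R}^2$ be a closed topological disk. Then there exist no integer $N\ne0$ and $(p,q)\in\mathbb{Z}^2$ such that $F^N(D)\subseteq T_{p,q}(D)$ or $T_{p,q}(D)\subseteq F^N(D)$, where $T_{p,q}(x,y)=(x+p,y+q)$.
   Context: $\mathbb{T}^2=\mathbb{R}^2/\mathbb{Z}^2$. $\mathrm{Homeo}_*(\mathbb{T}^2)$ is the set of homeomorphisms of $\mathbb{T}^2$ isotopic to the identity whose rotation set (the set of limit points mod $\mathbb{Z}^2$ of $(F^{n_k}(\tilde z)-\tilde z)/n_k$, $n_k\to\infty$, $\tilde z\in\mathbb{R}^2$, for a lift $F$) is a single point $(\alpha,\beta)\bmod\mathbb{Z}^2$ with $1,\alpha,\beta$ rationally independent. *)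

(* Defs.v *)
From Stdlib Require Import Reals ZArith.
Open Scope R_scope.

Definition pt := (R * R)%type.

(* max-norm distance on R^2 (induces the usual topology) *)
Definition dist2 (z w : pt) : R := Rmax (Rabs (fst z - fst w)) (Rabs (snd z - snd w)).

Definition cont2 (f : pt -> pt) : Prop :=
  forall z eps, eps > 0 -> exists d, d > 0 /\
    forall w, dist2 z w < d -> dist2 (f z) (f w) < eps.

Definition cont2_on (A : pt -> Prop) (f : pt -> pt) : Prop :=
  forall z, A z -> forall eps, eps > 0 -> exists d, d > 0 /\
    forall w, A w -> dist2 z w < d -> dist2 (f z) (f w) < eps.

Definition homeo2 (F G : pt -> pt) : Prop :=
  cont2 F /\ cont2 G /\ (forall z, G (F z) = z) /\ (forall z, F (G z) = z).

Definition T (p q : Z) (z : pt) : pt := (fst z + IZR p, snd z + IZR q).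

(* F commutes with integer translations: F is a lift of a homeomorphism of
   T^2 acting trivially on pi_1, i.e. isotopic to the identity. *)
Definition is_lift (F : pt -> pt) : Prop :=
  forall p q z, F (T p q z) = T p q (F z).

Fixpoint iter (n : nat) (f : pt -> pt) (z : pt) : pt :=
  match n with O => z | S k => f (iter k f z) end.

Definition iterZ (F G : pt -> pt) (N : Z) (z : pt) : pt :=
  match N with
  | Z0 => z
  | Zpos n => iter (Pos.to_nat n) F z
  | Zneg n => iter (Pos.to_nat n) G z
  end.

Definition in_rotation_set (F : pt -> pt) (v : pt) : Prop :=
  exists (z : pt) (n : nat -> nat),
    (forall M, exists K, forall k, (k >= K)%nat -> (n k >= M)%nat) /\
    (forall eps, eps > 0 -> exists K, forall k, (k >= K)%nat ->
       dist2 ((fst (iter (n k) F z) - fst z) / INR (n k),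
              (snd (iter (n k) F z) - snd z) / INR (n k)) v < eps).

Definition rationally_independent3 (a b : R) : Prop :=
  forall x y w : Z, IZR x + IZR y * a + IZR w * b = 0 -> x = 0%Z /\ y = 0%Z /\ w = 0%Z.

(* the lift F of f in Homeo_*(T^2): rotation set is a single point (alpha,beta)
   with 1, alpha, beta rationally independent *)
Definition in_Homeo_star_lift (F G : pt -> pt) : Prop :=
  homeo2 F G /\ is_lift F /\
  exists alpha beta : R,
    (forall v, in_rotation_set F v <-> v = (alpha, beta)) /\
    rationally_independent3 alpha beta.

Definition closed_unit_disk (z : pt) : Prop := fst z * fst z + snd z * snd z <= 1.

Definition closed_top_disk (D : pt -> Prop) : Prop :=
  exists h : pt -> pt,
    cont2_on closed_unit_disk h /\
    (forall u v, closed_unit_disk u -> closed_unit_disk v -> h u = h v -> u = v) /\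
    (forall z, D z <-> exists u, closed_unit_disk u /\ z = h u).

(* Main.v *)
Require Import Defs.
From Stdlib Require Import Reals ZArith Lra Lia Psatz Classical ClassicalEpsilon.
Import Defs.
Open Scope R_scope.

Lemma sub1 (u : nat -> R) : (forall n, -1 <= u n <= 1) ->
  exists l (phi : nat -> nat), (forall i, (phi i < phi (S i))%nat) /\
   (forall eps, eps > 0 -> exists I, forall i, (i >= I)%nat -> Rabs (u (phi i) - l) < eps).
Proof.
  intros Hu.
  destruct (Bolzano_Weierstrass u (fun c => -1 <= c <= 1) (compact_P3 _ _) Hu) as [l Hl].
  assert (c : forall N i : nat, {p : nat | (N <= p)%nat /\ Rabs (u p - l) < / INR (S i)}).
  { intros N i. apply constructive_indefinite_description.
    assert (Hpos : 0 < / INR (S i)) by (apply Rinv_0_lt_compat, lt_0_INR; lia).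
    destruct (Hl (disc l (mkposreal _ Hpos)) N) as [p [Hp1 Hp2]].
    - unfold neighbourhood. exists (mkposreal _ Hpos). unfold included. auto.
    - exists p. split; [exact Hp1| exact Hp2]. }
  set (phi := fix phi (i : nat) : nat := match i with
        | O => proj1_sig (c O O)
        | S k => proj1_sig (c (S (phi k)) (S k)) end).
  exists l, phi. split.
  - intros i. exact (proj1 (proj2_sig (c (S (phi i)) (S i)))).
  - intros eps Heps. destruct (archimed_cor1 eps Heps) as [N [HN HN0]].
    exists N. intros i Hi.
    assert (Hb : Rabs (u (phi i) - l) < / INR (S i)).
    { destruct i; simpl; [exact (proj2 (proj2_sig (c O O))) | exact (proj2 (proj2_sig (c (S (phi i)) (S i))))]. }
    eapply Rlt_le_trans; [exact Hb|].
    apply Rle_trans with (/ INR N); [|lra].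
    apply Rinv_le_contravar; [apply lt_0_INR; lia| apply le_INR; lia].
Qed.

Lemma phi_ge (phi : nat -> nat) : (forall i, (phi i < phi (S i))%nat) -> forall i, (i <= phi i)%nat.
Proof. intros H i; induction i; [lia| specialize (H i); lia]. Qed.

Lemma phi_mono (phi : nat -> nat) : (forall i, (phi i < phi (S i))%nat) -> forall i j, (i <= j)%nat -> (phi i <= phi j)%nat.
Proof. intros H i j Hij; induction Hij; [lia| specialize (H m); lia]. Qed.

Lemma disk_bound (z : pt) : closed_unit_disk z -> -1 <= fst z <= 1 /\ -1 <= snd z <= 1.
Proof. unfold closed_unit_disk; intros; split; split; nra. Qed.

Lemma sub2 (u : nat -> pt) : (forall n, closed_unit_disk (u n)) ->
  exists l (psi : nat -> nat), closed_unit_disk l /\ (forall i, (i <= psi i)%nat) /\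
   (forall eps, eps > 0 -> exists I, forall i, (i >= I)%nat -> dist2 l (u (psi i)) < eps).
Proof.
  intros Hu.
  destruct (sub1 (fun n => fst (u n))) as [l1 [phi1 [Hm1 Hc1]]].
  { intro n; apply disk_bound, Hu. }
  destruct (sub1 (fun n => snd (u (phi1 n)))) as [l2 [phi2 [Hm2 Hc2]]].
  { intro n; apply disk_bound, Hu. }
  assert (Hconv : forall eps, eps > 0 -> exists I, forall i, (i >= I)%nat ->
     dist2 (l1, l2) (u (phi1 (phi2 i))) < eps).
  { intros eps Heps. destruct (Hc1 eps Heps) as [I1 H1]. destruct (Hc2 eps Heps) as [I2 H2].
    exists (Nat.max I1 I2). intros i Hi. unfold dist2; simpl.
    apply Rmax_lub_lt.
    - rewrite Rabs_minus_sym. apply H1. pose proof (phi_ge _ Hm2 i). lia.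
    - rewrite Rabs_minus_sym. apply H2. lia. }
  exists (l1, l2), (fun i => phi1 (phi2 i)). split; [|split].
  -
    unfold closed_unit_disk; simpl.
    apply Rnot_lt_le; intro Hgt.
    set (e := (l1*l1 + l2*l2 - 1) / 8).
    assert (He : e > 0) by (unfold e; lra).
    assert (He1 : Rmin e 1 > 0) by (apply Rmin_glb_lt; lra).
    destruct (Hconv _ He1) as [I HI]. specialize (HI I (le_n _)).
    set (w := u (phi1 (phi2 I))) in *.
    pose proof (Hu (phi1 (phi2 I))) as Hw. fold w in Hw.
    pose proof (disk_bound _ Hw) as [Hx Hy].
    unfold dist2 in HI; simpl in HI.
    assert (A1 : Rabs (l1 - fst w) < Rmin e 1) by (eapply Rle_lt_trans; [apply Rmax_l|exact HI]).
    assert (A2 : Rabs (l2 - snd w) < Rmin e 1) by (eapply Rle_lt_trans; [apply Rmax_r|exact HI]).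
    pose proof (Rmin_l e 1). pose proof (Rmin_r e 1).
    unfold closed_unit_disk in Hw.
    apply Rabs_def2 in A1. apply Rabs_def2 in A2.
    assert (l1*l1 <= fst w * fst w + 3 * e) by nra.
    assert (l2*l2 <= snd w * snd w + 3 * e) by nra.
    unfold e in *. lra.
  - intro i. pose proof (phi_ge _ Hm2 i). pose proof (phi_ge _ Hm1 (phi2 i)). lia.
  - exact Hconv.
Qed.
Lemma aux_ineq (a c B eps : R) (k m : nat) : (m > 0)%nat -> eps > 0 -> INR k > B / eps ->
  Rabs (a - INR k * c) <= B -> Rabs (a / INR (m*k) - c / INR m) < eps.
Proof.
  intros Hm Heps HK Ha.
  assert (HB : 0 <= B) by (eapply Rle_trans; [apply Rabs_pos|exact Ha]).
  assert (HMm : 1 <= INR m) by (replace 1 with (INR 1) by reflexivity; apply le_INR; lia).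
  assert (HBe : B < eps * INR k).
  { apply (Rmult_lt_compat_r eps) in HK; [|lra].
    replace (B / eps * eps) with B in HK by (field; lra). lra. }
  assert (HKp : 0 < INR k) by nra.
  rewrite mult_INR.
  replace (a / (INR m * INR k) - c / INR m) with ((a - INR k * c) / (INR m * INR k)) by (field; lra).
  unfold Rdiv. rewrite Rabs_mult, Rabs_inv, (Rabs_right (INR m * INR k)) by nra.
  apply (Rmult_lt_reg_r (INR m * INR k)); [nra|].
  rewrite Rmult_assoc, Rinv_l by nra. nra.
Qed.

Lemma core (F G : pt -> pt) (HF : in_Homeo_star_lift F G) (z : pt) (m : nat) (p q : Z) (B : R) :
  (m > 0)%nat ->
  (forall k, Rabs (fst (iter (m*k)%nat F z) - fst z - INR k * IZR p) <= B /\
             Rabs (snd (iter (m*k)%nat F z) - snd z - INR k * IZR q) <= B) -> False.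
Proof.
  intros Hm Hb.
  destruct HF as [_ [_ [al [be [Hrot Hind]]]]].
  assert (Hin : in_rotation_set F (IZR p / INR m, IZR q / INR m)).
  { exists z, (fun k => (m*k)%nat). split.
    - intro M. exists M. intros k Hk. nia.
    - intros eps Heps. destruct (INR_unbounded (B/eps)) as [K HK]. exists K. intros k Hk.
      assert (HkK : INR k > B / eps) by (pose proof (le_INR _ _ Hk); lra).
      destruct (Hb k) as [H1 H2].
      unfold dist2; simpl. apply Rmax_lub_lt; apply aux_ineq with B; auto. }
  apply Hrot in Hin. injection Hin as Ha Hb'.
  destruct (Hind (- p)%Z (Z.of_nat m) 0%Z) as [_ [Hc _]].
  - rewrite opp_IZR, <- INR_IZR_INZ, <- Ha. assert (INR m > 0) by (apply lt_0_INR; lia).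
    simpl. field. lra.
  - lia.
Qed.

Lemma iter_add (a b : nat) (f : pt -> pt) (z : pt) : iter (a + b) f z = iter a f (iter b f z).
Proof. induction a; simpl; [reflexivity| rewrite IHa; reflexivity]. Qed.

Lemma iter_S' (n : nat) (f : pt -> pt) (z : pt) : iter (S n) f z = iter n f (f z).
Proof. replace (S n) with (n + 1)%nat by lia. rewrite iter_add. reflexivity. Qed.

Lemma iter_T (F : pt -> pt) (HL : is_lift F) n p q z : iter n F (T p q z) = T p q (iter n F z).
Proof. induction n; simpl; [reflexivity| rewrite IHn, HL; reflexivity]. Qed.

Lemma T_T p q p' q' z : T p q (T p' q' z) = T (p + p') (q + q') z.
Proof. destruct z; unfold T; simpl; rewrite !plus_IZR; f_equal; ring. Qed.

Lemma T_0 z : T 0 0 z = z.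
Proof. destruct z; unfold T; simpl; f_equal; ring. Qed.

Lemma T_inv p q z : T (- p) (- q) (T p q z) = z.
Proof. destruct z; unfold T; simpl; rewrite !opp_IZR; f_equal; ring. Qed.

Lemma T_inv' p q z : T p q (T (- p) (- q) z) = z.
Proof. destruct z; unfold T; simpl; rewrite !opp_IZR; f_equal; ring. Qed.

Lemma iter_GF (F G : pt -> pt) : (forall z, G (F z) = z) -> forall n z, iter n G (iter n F z) = z.
Proof. intros H n; induction n; intro z; [reflexivity|]. rewrite iter_S'. simpl. rewrite H. apply IHn. Qed.

Lemma cont2_comp f g : cont2 f -> cont2 g -> cont2 (fun z => f (g z)).
Proof.
  intros Hf Hg z eps Heps. destruct (Hf (g z) eps Heps) as [d1 [Hd1 H1]].
  destruct (Hg z d1 Hd1) as [d2 [Hd2 H2]]. exists d2; split; auto.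
Qed.

Lemma cont2_iter F : cont2 F -> forall n, cont2 (iter n F).
Proof.
  intros HF n; induction n.
  - intros z eps Heps. exists eps. split; auto.
  - simpl. apply (cont2_comp F (iter n F)); auto.
Qed.

Lemma cont2_on_comp A h f : cont2_on A h -> cont2 f -> cont2_on A (fun z => f (h z)).
Proof.
  intros Hh Hf z Hz eps Heps. destruct (Hf (h z) eps Heps) as [d1 [Hd1 H1]].
  destruct (Hh z Hz d1 Hd1) as [d2 [Hd2 H2]]. exists d2; split; auto.
Qed.

Lemma dist_fst a b : Rabs (fst b) <= Rabs (fst a) + dist2 a b.
Proof.
  unfold dist2. pose proof (Rmax_l (Rabs (fst a - fst b)) (Rabs (snd a - snd b))).
  pose proof (Rabs_triang (fst a) (fst b - fst a)) as H0. pose proof (Rabs_minus_sym (fst a) (fst b)).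
  assert (E : fst a + (fst b - fst a) = fst b) by ring. rewrite E in H0. lra.
Qed.

Lemma dist_snd a b : Rabs (snd b) <= Rabs (snd a) + dist2 a b.
Proof.
  unfold dist2. pose proof (Rmax_r (Rabs (fst a - fst b)) (Rabs (snd a - snd b))).
  pose proof (Rabs_triang (snd a) (snd b - snd a)) as H0. pose proof (Rabs_minus_sym (snd a) (snd b)).
  assert (E : snd a + (snd b - snd a) = snd b) by ring. rewrite E in H0. lra.
Qed.

Lemma hd_bound h : cont2_on closed_unit_disk h -> exists B, forall u, closed_unit_disk u ->
  Rabs (fst (h u)) <= B /\ Rabs (snd (h u)) <= B.
Proof.
  intros Hh. apply NNPP; intro Hn.
  assert (Hex : forall n : nat, exists u, closed_unit_disk u /\
     INR n < Rmax (Rabs (fst (h u))) (Rabs (snd (h u)))).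
  { intro n. apply NNPP; intro Hn2. apply Hn. exists (INR n). intros u Hu.
    destruct (Rle_or_lt (Rmax (Rabs (fst (h u))) (Rabs (snd (h u)))) (INR n)) as [Hle|Hlt].
    - pose proof (Rmax_l (Rabs (fst (h u))) (Rabs (snd (h u)))).
      pose proof (Rmax_r (Rabs (fst (h u))) (Rabs (snd (h u)))). split; lra.
    - exfalso; apply Hn2; exists u; auto. }
  set (un := fun n => proj1_sig (constructive_indefinite_description _ (Hex n))).
  assert (Hun : forall n, closed_unit_disk (un n) /\ INR n < Rmax (Rabs (fst (h (un n)))) (Rabs (snd (h (un n))))).
  { intro n. exact (proj2_sig (constructive_indefinite_description _ (Hex n))). }
  destruct (sub2 un (fun n => proj1 (Hun n))) as [l [psi [Hl [Hpsi Hc]]]].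
  destruct (Hh l Hl 1 Rlt_0_1) as [d [Hd Hcd]].
  destruct (Hc d Hd) as [I HI].
  destruct (INR_unbounded (Rmax (Rabs (fst (h l))) (Rabs (snd (h l))) + 1)) as [M HM].
  set (i := Nat.max I M).
  specialize (HI i ltac:(unfold i; lia)).
  specialize (Hcd _ (proj1 (Hun (psi i))) HI).
  pose proof (proj2 (Hun (psi i))) as Hbig.
  pose proof (dist_fst (h l) (h (un (psi i)))). pose proof (dist_snd (h l) (h (un (psi i)))).
  pose proof (Rmax_l (Rabs (fst (h l))) (Rabs (snd (h l)))).
  pose proof (Rmax_r (Rabs (fst (h l))) (Rabs (snd (h l)))).
  assert (Rmax (Rabs (fst (h (un (psi i))))) (Rabs (snd (h (un (psi i))))) <
          Rmax (Rabs (fst (h l))) (Rabs (snd (h l))) + 1) by (apply Rmax_lub_lt; lra).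
  assert (INR M <= INR (psi i)) by (apply le_INR; pose proof (Hpsi i); unfold i in *; lia).
  lra.
Qed.

Lemma D_bound D : closed_top_disk D -> exists B, forall w, D w -> Rabs (fst w) <= B /\ Rabs (snd w) <= B.
Proof.
  intros [h [Hh [_ HD]]]. destruct (hd_bound h Hh) as [B HB]. exists B.
  intros w Hw. apply HD in Hw. destruct Hw as [u [Hu ->]]. auto.
Qed.

Lemma caseA (F G : pt -> pt) (HF : in_Homeo_star_lift F G) (D : pt -> Prop) (HD : closed_top_disk D)
  (m : nat) (p q : Z) : (m > 0)%nat ->
  (forall z, D z -> exists w, D w /\ iter m F z = T p q w) -> False.
Proof.
  intros Hm HA.
  assert (HL : is_lift F) by (destruct HF as [_ [HL _]]; exact HL).
  destruct (D_bound D HD) as [B HB].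
  destruct HD as [hd [_ [_ HDi]]].
  assert (Hz0 : D (hd (0,0))).
  { apply HDi. exists (0,0). split; [unfold closed_unit_disk; simpl; lra| reflexivity]. }
  set (z0 := hd (0,0)) in *.
  assert (Hk : forall k : nat, exists w, D w /\
     iter (m*k)%nat F z0 = T (Z.of_nat k * p) (Z.of_nat k * q) w).
  { induction k.
    - exists z0. split; auto. replace (m*0)%nat with 0%nat by lia. simpl. rewrite T_0. reflexivity.
    - destruct IHk as [w [Hw Heq]].
      destruct (HA w Hw) as [w' [Hw' Heq']].
      exists w'. split; auto.
      replace (m * S k)%nat with (m + m*k)%nat by lia.
      rewrite iter_add, Heq, iter_T, Heq', T_T by exact HL.
      rewrite Nat2Z.inj_succ. f_equal; ring. }
  apply (core F G HF z0 m p q (B + B) Hm).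
  intro k. destruct (Hk k) as [w [Hw Heq]]. rewrite Heq.
  destruct (HB _ Hw) as [H1 H2]. destruct (HB _ Hz0) as [H3 H4].
  unfold T; simpl. rewrite !mult_IZR, <- !INR_IZR_INZ.
  split.
  - replace (fst w + INR k * IZR p - fst z0 - INR k * IZR p) with (fst w - fst z0) by ring.
    pose proof (Rabs_triang (fst w) (- fst z0)). rewrite Rabs_Ropp in H. unfold Rminus. lra.
  - replace (snd w + INR k * IZR q - snd z0 - INR k * IZR q) with (snd w - snd z0) by ring.
    pose proof (Rabs_triang (snd w) (- snd z0)). rewrite Rabs_Ropp in H. unfold Rminus. lra.
Qed.

Lemma caseB (F G : pt -> pt) (HF : in_Homeo_star_lift F G) (D : pt -> Prop) (HD : closed_top_disk D)
  (m : nat) (p q : Z) : (m > 0)%nat ->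
  (forall w, D w -> exists z, D z /\ T p q w = iter m F z) -> False.
Proof.
  intros Hm HB0.
  assert (HL : is_lift F) by (destruct HF as [_ [HL _]]; exact HL).
  assert (HGF : forall z, G (F z) = z) by (destruct HF as [[_ [_ [H _]]] _]; exact H).
  assert (HFc : cont2 F) by (destruct HF as [[H _] _]; exact H).
  destruct (D_bound D HD) as [B HB].
  destruct HD as [hd [Hhd [_ HDi]]].
  assert (Hz0 : D (hd (0,0))).
  { apply HDi. exists (0,0). split; [unfold closed_unit_disk; simpl; lra| reflexivity]. }
  set (x := fun k => iter k (fun y => iter m G (T p q y)) (hd (0,0))).
  assert (HFG : forall z, F (G z) = z) by (destruct HF as [[_ [_ [_ H]]] _]; exact H).
  assert (HxS : forall k, x (S k) = iter m G (T p q (x k))) by reflexivity.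
  assert (HxD : forall k, D (x k)).
  { induction k.
    - exact Hz0.
    - destruct (HB0 _ IHk) as [z [Hz Heq]].
      rewrite HxS, Heq, iter_GF by exact HGF. exact Hz. }
  assert (HxF : forall k, iter m F (x (S k)) = T p q (x k)).
  { intro k. rewrite HxS. apply iter_GF. exact HFG. }
  assert (Hrel : forall j k, iter (m*j)%nat F (x (j+k)%nat) = T (Z.of_nat j * p) (Z.of_nat j * q) (x k)).
  { induction j; intro k.
    - replace (m*0)%nat with 0%nat by lia. simpl. rewrite T_0. reflexivity.
    - replace (m * S j)%nat with (m*j + m)%nat by lia.
      rewrite iter_add. replace (S j + k)%nat with (S (j + k)) by lia.
      rewrite HxF, iter_T, IHj, T_T by exact HL.
      rewrite Nat2Z.inj_succ. f_equal; ring. }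
  assert (Hpre : forall k, exists u, closed_unit_disk u /\ x k = hd u).
  { intro k. apply HDi. apply HxD. }
  set (un := fun k => proj1_sig (constructive_indefinite_description _ (Hpre k))).
  assert (Hun : forall k, closed_unit_disk (un k) /\ x k = hd (un k)).
  { intro k. exact (proj2_sig (constructive_indefinite_description _ (Hpre k))). }
  destruct (sub2 un (fun n => proj1 (Hun n))) as [l [psi [Hl [Hpsi Hc]]]].
  assert (HzD : D (hd l)) by (apply HDi; exists l; auto).
  assert (Hbd : forall j, Rabs (fst (iter (m*j)%nat F (hd l)) - INR j * IZR p) <= B + 1 /\
                          Rabs (snd (iter (m*j)%nat F (hd l)) - INR j * IZR q) <= B + 1).
  { intro j.
    assert (Hcj := cont2_on_comp closed_unit_disk hd (iter (m*j)%nat F) Hhd (cont2_iter F HFc _)).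
    destruct (Hcj l Hl 1 Rlt_0_1) as [d [Hd Hcd]].
    destruct (Hc d Hd) as [I HI].
    set (i := Nat.max I j).
    specialize (HI i ltac:(unfold i; lia)).
    specialize (Hcd _ (proj1 (Hun (psi i))) HI). simpl in Hcd.
    rewrite <- (proj2 (Hun (psi i))) in Hcd.
    assert (Hpi : psi i = (j + (psi i - j))%nat) by (pose proof (Hpsi i); unfold i in *; lia).
    rewrite Hpi, Hrel in Hcd.
    destruct (HB _ (HxD (psi i - j)%nat)) as [H1 H2].
    set (y := x (psi i - j)%nat) in *.
    unfold dist2, T in Hcd; simpl in Hcd. rewrite !mult_IZR, <- !INR_IZR_INZ in Hcd.
    pose proof (Rmax_l (Rabs (fst (iter (m * j) F (hd l)) - (fst y + INR j * IZR p)))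
                       (Rabs (snd (iter (m * j) F (hd l)) - (snd y + INR j * IZR q)))).
    pose proof (Rmax_r (Rabs (fst (iter (m * j) F (hd l)) - (fst y + INR j * IZR p)))
                       (Rabs (snd (iter (m * j) F (hd l)) - (snd y + INR j * IZR q)))).
    pose proof (Rabs_triang (fst (iter (m * j) F (hd l)) - (fst y + INR j * IZR p)) (fst y)).
    pose proof (Rabs_triang (snd (iter (m * j) F (hd l)) - (snd y + INR j * IZR q)) (snd y)).
    replace (fst (iter (m * j) F (hd l)) - (fst y + INR j * IZR p) + fst y)
      with (fst (iter (m * j) F (hd l)) - INR j * IZR p) in * by ring.
    replace (snd (iter (m * j) F (hd l)) - (snd y + INR j * IZR q) + snd y)
      with (snd (iter (m * j) F (hd l)) - INR j * IZR q) in * by ring.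
    split; lra. }
  apply (core F G HF (hd l) m p q (B + 1 + B) Hm).
  intro k. destruct (Hbd k) as [H1 H2]. destruct (HB _ HzD) as [H3 H4].
  split.
  - pose proof (Rabs_triang (fst (iter (m*k)%nat F (hd l)) - INR k * IZR p) (- fst (hd l))).
    rewrite Rabs_Ropp in H.
    replace (fst (iter (m*k)%nat F (hd l)) - INR k * IZR p + - fst (hd l)) with
      (fst (iter (m * k) F (hd l)) - fst (hd l) - INR k * IZR p) in H by ring. lra.
  - pose proof (Rabs_triang (snd (iter (m*k)%nat F (hd l)) - INR k * IZR q) (- snd (hd l))).
    rewrite Rabs_Ropp in H.
    replace (snd (iter (m*k)%nat F (hd l)) - INR k * IZR q + - snd (hd l)) with
      (snd (iter (m * k) F (hd l)) - snd (hd l) - INR k * IZR q) in H by ring. lra.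
Qed.

Theorem lemma6 (F G : pt -> pt) (HF : in_Homeo_star_lift F G)
  (D : pt -> Prop) (HD : closed_top_disk D) :
  ~ exists (N p q : Z), N <> 0%Z /\
     ((forall z, D z -> exists w, D w /\ iterZ F G N z = T p q w) \/
      (forall w, D w -> exists z, D z /\ T p q w = iterZ F G N z)).
Proof.
  intros [N [p [q [HN Hor]]]].
  assert (HL : is_lift F) by (destruct HF as [_ [HL _]]; exact HL).
  assert (HGF : forall z, G (F z) = z) by (destruct HF as [[_ [_ [H _]]] _]; exact H).
  assert (HFG : forall z, F (G z) = z) by (destruct HF as [[_ [_ [_ H]]] _]; exact H).
  destruct N as [|n|n]; [congruence| |].
  - assert (Hm : (Pos.to_nat n > 0)%nat) by lia. simpl in Hor.
    destruct Hor as [H|H].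
    + exact (caseA F G HF D HD _ p q Hm H).
    + exact (caseB F G HF D HD _ p q Hm H).
  - assert (Hm : (Pos.to_nat n > 0)%nat) by lia. simpl in Hor.
    set (m := Pos.to_nat n) in *.
    destruct Hor as [H|H].
    + apply (caseB F G HF D HD m (- p) (- q) Hm).
      intros w Hw. destruct (H w Hw) as [w' [Hw' Heq]].
      exists w'. split; auto.
      rewrite <- (T_inv p q w'), <- Heq, iter_T, iter_GF by assumption. reflexivity.
    + apply (caseA F G HF D HD m (- p) (- q) Hm).
      intros z Hz. destruct (H z Hz) as [z' [Hz' Heq]].
      exists z'. split; auto.
      apply (f_equal (iter m F)) in Heq. rewrite iter_GF in Heq by assumption.
      rewrite iter_T in Heq by assumption. rewrite <- Heq, T_inv. reflexivity.
Qed.
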